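(* Let $G$ be a connected, finite, pointed, edge-ordered graph with distinguished vertex $v_0$, and let $T=(\Gamma\circ S)(G)$. Then the neighborhood ordering $\triangleleft$ of the distinguished point $v_0$ in $T$ is the lexicographic breadth-first traversal of $G$: for vertices $u,v$ of $G$ with $v_0\to u$ and $v_0\to v$ in $T$, $v_0\to u\triangleleft v_0\to v$ in $T$ iff $u$ precedes $v$ in the lexicographic breadth-first traversal of $G$ (and these targets are the vertices other than $v_0$, which comes first in the traversal).
   Context: A (directed) graph is $(V,\to)$ with $\to\subseteq V\times V$; $N(u)$ is the set of outgoing edges of $u$. A pointed graph has a distinguished vertex $v_0$; connected means every vertex is reachable by a path from $v_0$. A path is a finite sequence $v_1\to\cdots\to v_n$ of vertices joined by edges, of length $|\pi|$; co-initial paths share their source; $\pi\sqsubset\sigma$ means $\pi$ is a proper prefix of $\sigma$. A finite edge-ordered graph is a finite graph with a strict linear order $\triangleleft$ on each neighborhood. Lexicographic path order: if $\pi\sqsubset\sigma$ then $\pi\prec\sigma$ (symmetrically); otherwise, with $\zeta$ the longest common prefix, $u$ its target and $v_1,v_2$ the next vertices, $\pi\prec\sigma$ iff $u\to v_1\triangleleft u\to v_2$. Shortlex: $\pi\prec^s\sigma$ iff $|\pi|<|\sigma|$ or ($|\pi|=|\sigma|$ and $\pi\prec\sigma$). $\min^s(u\rightsquigarrow v)$ is the $\prec^s$-least path from $u$ to $v$. Lexicographic breadth-first search on $G$: initialize a list $L=()$ and a queue $Q=(v_0)$; while $Q$ is nonempty, dequeue the front element $v$; if $v\in L$, continue; otherwise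 append $v$ to $L$ and enqueue the vertices of $\partial v$ (neighbors of $v$ not in $L$) in $\triangleleft$-order. The lexicographic breadth-first traversal is the order in which vertices are appended to $L$. An arborescence is a pointed graph with a unique path $v_0\rightsquigarrow u$ for every $u$. Functors: $S(G)$ is the edge-ordered arborescence on the vertices of $G$ with the same distinguished vertex, containing $u\to v$ iff it is an edge of $\min^s(v_0\rightsquigarrow v)$ in $G$, with edge order inherited from $G$. For an edge-ordered arborescence $A$, $\Gamma(A)$ has the same vertices and distinguished point, edge relation the transitive closure of that of $A$, and $u\to v_1\triangleleft u\to v_2$ iff $(v_0\rightsquigarrow v_1)\prec^s(v_0\rightsquigarrow v_2)$, where $v_0\rightsquigarrow v$ denotes the unique path in $A$. *)

(* Defs.v *)
From mathcomp Require Import all_boot.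
From Stdlib Require Import Relations.

Set Implicit Arguments.
Unset Strict Implicit.
Unset Printing Implicit Defensive.

Section Graphs.
Variable V : finType.

(* A graph on V: edge relation E; an edge order: ord u v1 v2 means
   (u -> v1) <| (u -> v2) in the neighbourhood of u. *)

Definition edge_ordered (E : V -> V -> Prop) (ord : V -> V -> V -> Prop) : Prop :=
  forall u,
    (forall x y, ord u x y -> E u x /\ E u y) /\
    (forall x, ~ ord u x x) /\
    (forall x y z, ord u x y -> ord u y z -> ord u x z) /\
    (forall x y, E u x -> E u y -> x <> y -> ord u x y \/ ord u y x).

Fixpoint is_walk (E : V -> V -> Prop) (x : V) (s : seq V) : Prop :=
  match s with
  | [::] => True
  | y :: s' => E x y /\ is_walk E y s'
  end.

Definition walk (E : V -> V -> Prop) (x y : V) (p : seq V) : Prop :=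
  match p with
  | [::] => False
  | a :: s => a = x /\ is_walk E a s /\ last a s = y
  end.

Definition connected (E : V -> V -> Prop) (v0 : V) : Prop :=
  forall v, exists p, walk E v0 v p.

Definition lexlt (ord : V -> V -> V -> Prop) (p q : seq V) : Prop :=
  (prefix p q /\ p <> q) \/
  (exists x z v1 v2 r1 r2,
      p = x :: z ++ v1 :: r1 /\ q = x :: z ++ v2 :: r2 /\ v1 <> v2 /\
      ord (last x z) v1 v2).

Definition shortlex (ord : V -> V -> V -> Prop) (p q : seq V) : Prop :=
  size p < size q \/ (size p = size q /\ lexlt ord p q).

Definition minpath E ord (v0 v : V) (p : seq V) : Prop :=
  walk E v0 v p /\ forall q, walk E v0 v q -> q = p \/ shortlex ord p q.

Definition S_edge E ord (v0 : V) (u v : V) : Prop :=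
  exists p p1 p2, minpath E ord v0 v p /\ p = p1 ++ u :: v :: p2.

Definition S_ord E ord (v0 : V) (u v1 v2 : V) : Prop :=
  S_edge E ord v0 u v1 /\ S_edge E ord v0 u v2 /\ ord u v1 v2.

(* the functor Gamma, for an edge-ordered arborescence (A, Aord, v0);
   the unique path v0 ~> v in A is referred to as "a path v0 ~> v in A". *)
Definition Gamma_edge (A : V -> V -> Prop) : V -> V -> Prop := clos_trans V A.

Definition Gamma_ord (A : V -> V -> Prop) (Aord : V -> V -> V -> Prop) (v0 : V)
    (u v1 v2 : V) : Prop :=
  clos_trans V A u v1 /\ clos_trans V A u v2 /\
  exists p1 p2, walk A v0 v1 p1 /\ walk A v0 v2 p2 /\ shortlex Aord p1 p2.

(* Lexicographic breadth-first search, as a (deterministic) transition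
   relation on states (L, Q). *)
Fixpoint chain (R : V -> V -> Prop) (s : seq V) : Prop :=
  match s with
  | x :: ((y :: _) as s') => R x y /\ chain R s'
  | _ => True
  end.

Inductive lbfs_step (E : V -> V -> Prop) (ord : V -> V -> V -> Prop) :
    seq V * seq V -> seq V * seq V -> Prop :=
  | lbfs_skip L v Q : v \in L -> lbfs_step E ord (L, v :: Q) (L, Q)
  | lbfs_visit L v Q ns :
      v \notin L -> uniq ns ->
      (forall x, x \in ns <-> (E v x /\ x \notin rcons L v)) ->
      chain (ord v) ns ->
      lbfs_step E ord (L, v :: Q) (rcons L v, Q ++ ns).

Definition lbfs_traversal E ord (v0 : V) (L : seq V) : Prop :=
  clos_refl_trans _ (lbfs_step E ord) ([::], [:: v0]) (L, [::]).

Definition precedes (L : seq V) (u v : V) : Prop :=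
  u \in L /\ v \in L /\ index u L < index v L.

End Graphs.

(* Main.v *)
Require Import Defs.
From mathcomp Require Import all_boot.
From Stdlib Require Import Relations.
From Stdlib Require Import Classical ClassicalEpsilon.

Set Implicit Arguments.
Unset Strict Implicit.
Unset Printing Implicit Defensive.

Section Gen.
Variable V : finType.

Fixpoint lexR (o : V -> V -> V -> Prop) (u : V) (p q : seq V) : Prop :=
  match p, q with
  | a :: p', b :: q' => (a <> b /\ o u a b) \/ (a = b /\ lexR o a p' q')
  | _, _ => False
  end.

Definition sl o u (p q : seq V) : Prop :=
  size p < size q \/ (size p = size q /\ lexR o u p q).

Lemma lexR_app o x z v1 v2 r1 r2 : v1 <> v2 -> o (last x z) v1 v2 ->
  lexR o x (z ++ v1 :: r1) (z ++ v2 :: r2).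
Proof.
elim: z x => [|a z IH] x /= Hne Ho; first by left.
by right; split => //; apply: IH.
Qed.

Lemma lexR_split o x p q : lexR o x p q ->
  exists z v1 v2 r1 r2, p = z ++ v1 :: r1 /\ q = z ++ v2 :: r2 /\ v1 <> v2 /\
     o (last x z) v1 v2.
Proof.
elim: p x q => [|a p IH] x [|b q] //=.
case=> [[Hne Ho]|[<- H]].
  by exists [::], a, b, p, q.
have [z [v1 [v2 [r1 [r2 [-> [-> [Hn Ho]]]]]]]] := IH _ _ H.
by exists (a :: z), v1, v2, r1, r2.
Qed.

Lemma lexlt_lexR o x p q : size p = size q ->
  lexlt o (x :: p) (x :: q) <-> lexR o x p q.
Proof.
move=> Hs; split.
  case=> [[Hp Hne]|[y [z [v1 [v2 [r1 [r2 [Hp [Hq [Hn Ho]]]]]]]]]].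
    exfalso; apply: Hne; move: Hp; rewrite prefixE /= Hs take_size.
    by move/eqP.
  case: Hp => Hy ->; case: Hq => _ ->; rewrite -Hy in Ho; exact: lexR_app.
move/lexR_split => [z [v1 [v2 [r1 [r2 [-> [-> [Hn Ho]]]]]]]].
right; by exists x, z, v1, v2, r1, r2.
Qed.

Lemma shortlex_sl o x p q :
  shortlex o (x :: p) (x :: q) <-> sl o x p q.
Proof.
rewrite /shortlex /sl /= ltnS; split.
  case=> [->|[Hs H]]; first by left.
  have Hs' : size p = size q by case: Hs.
  by right; split => //; apply/lexlt_lexR.
case=> [->|[Hs H]]; [by left| right; split; first by rewrite Hs].
by apply/lexlt_lexR.
Qed.

Lemma lexR_sub (o o' : V -> V -> V -> Prop) (R : V -> V -> Prop) x p q :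
  (forall u a b, R u a -> R u b -> (o u a b <-> o' u a b)) ->
  is_walk R x p -> is_walk R x q -> (lexR o x p q <-> lexR o' x p q).
Proof.
move=> Ho; elim: p x q => [|a p IH] x [|b q] //= [Ha Hp] [Hb Hq].
split; case=> [[Hn H]|[Hab H]].
- by left; split => //; apply/Ho.
- by right; split => //; apply/IH => //; rewrite Hab.
- by left; split => //; apply/Ho.
- by right; split => //; apply/IH => //; rewrite Hab.
Qed.

Lemma is_walk_rcons (R : V -> V -> Prop) x (p : seq V) a :
  is_walk R x (rcons p a) <-> is_walk R x p /\ R (last x p) a.
Proof.
elim: p x => [|b p IH] x /=; first by split; [case|case].
rewrite IH; tauto.
Qed.

Lemma is_walk_cat (R : V -> V -> Prop) x (p q : seq V) :
  is_walk R x (p ++ q) <-> is_walk R x p /\ is_walk R (last x p) q.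
Proof.
elim: p x => [|b p IH] x /=; first by tauto.
rewrite IH; tauto.
Qed.

Lemma walkE (R : V -> V -> Prop) x y (p : seq V) :
  walk R x y p <-> exists p', p = x :: p' /\ is_walk R x p' /\ last x p' = y.
Proof.
case: p => [|a p] /=; first by split => // [[p' []]].
split; first by case=> -> [H1 H2]; exists p.
by case=> p' [[-> ->] [H1 H2]].
Qed.

End Gen.

Section Main.
Variable V : finType.
Variable E : V -> V -> Prop.
Variable ord : V -> V -> V -> Prop.
Variable v0 : V.
Hypothesis Hord : edge_ordered E ord.
Hypothesis Hconn : connected E v0.

Lemma ord_irr u x : ~ ord u x x.
Proof. by have [_ [H _]] := Hord u. Qed.
Lemma ord_trans u x y z : ord u x y -> ord u y z -> ord u x z.
Proof. by have [_ [_ [H _]]] := Hord u; apply: H. Qed.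
Lemma ord_tot u x y : E u x -> E u y -> x <> y -> ord u x y \/ ord u y x.
Proof. by have [_ [_ [_ H]]] := Hord u; apply: H. Qed.
Lemma ord_ne u x y : ord u x y -> x <> y.
Proof. by move=> H Hxy; subst; exact: ord_irr H. Qed.

Lemma lexR_irr u p : ~ lexR ord u p p.
Proof.
elim: p u => [|a p IH] u //=; case=> [[]|[_ H]] //; exact: IH H.
Qed.

Lemma lexR_trans u p q r : lexR ord u p q -> lexR ord u q r -> lexR ord u p r.
Proof.
elim: p u q r => [|a p IH] u [|b q] [|c r] //=.
case=> [[Hab Ho]|[Hab H]]; case=> [[Hbc Ho']|[Hbc H']].
- left; have Hac := ord_trans Ho Ho'; split => //; exact: ord_ne Hac.
- by subst; left.
- by subst; left.
- by subst; right; split => //; apply: IH H H'.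
Qed.

Lemma lexR_tot u p q : is_walk E u p -> is_walk E u q -> size p = size q ->
  p <> q -> lexR ord u p q \/ lexR ord u q p.
Proof.
elim: p u q => [|a p IH] u [|b q] //= [Ha Hp] [Hb Hq] Hs Hne.
case: Hs => Hs.
have [Hab|Hab] := eqVneq a b.
  subst b.
  have Hpq : p <> q by move=> Hpq; apply: Hne; rewrite Hpq.
  by case: (IH a q Hp Hq Hs Hpq) => H; [left|right]; right; split.
have Hab' : a <> b by apply/eqP.
case: (ord_tot Ha Hb Hab') => H; [left|right]; left; split => //.
by move=> E'; apply: Hab'.
Qed.

Lemma lexR_rcons u p q a b : size p = size q ->
  (lexR ord u (rcons p a) (rcons q b) <->
   lexR ord u p q \/ (p = q /\ a <> b /\ ord (last u p) a b)).
Proof.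
elim: p u q => [|c p IH] u [|d q] //= Hs.
  split; first by case=> [[H1 H2]|[_ []]]; right.
  by case=> [[]|[_ [H1 H2]]]; left.
case: Hs => Hs; rewrite IH //; split.
- case=> [H|[Hcd [H|[Hpq [Hab Ho]]]]]; [by left; left| by left; right|].
  by right; subst.
- case=> [[H|[Hcd H]]|[[-> ->] [Hab Ho]]]; [by left|by right; split => //; left|].
  by right; split => //; right.
Qed.

Lemma sl_irr u p : ~ sl ord u p p.
Proof. by case=> [|[_ H]]; [rewrite ltnn|exact: lexR_irr H]. Qed.

Lemma sl_trans u p q r : sl ord u p q -> sl ord u q r -> sl ord u p r.
Proof.
case=> [H1|[H1 H1']]; case=> [H2|[H2 H2']].
- by left; apply: ltn_trans H1 H2.
- by left; rewrite -H2.
- by left; rewrite H1.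
- by right; split; [rewrite H1|apply: lexR_trans H1' H2'].
Qed.

Lemma sl_tot u p q : is_walk E u p -> is_walk E u q -> p <> q ->
  sl ord u p q \/ sl ord u q p.
Proof.
move=> Hp Hq Hne; case: (ltngtP (size p) (size q)) => Hs.
- by left; left.
- by right; left.
- by case: (lexR_tot Hp Hq Hs Hne) => H; [left|right]; right.
Qed.

Lemma sl_rcons u p q a b :
  sl ord u (rcons p a) (rcons q b) <->
  sl ord u p q \/ (p = q /\ a <> b /\ ord (last u p) a b).
Proof.
rewrite /sl !size_rcons ltnS; split.
  case=> [H|[Hs H]]; first by left; left.
  case: Hs => Hs.
  by move/(lexR_rcons _ _ _ Hs): H => [H|H]; [left; right|right].
case=> [[H|[Hs H]]|[Hpq [Hab Ho]]].
- by left.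
- by right; split; [rewrite Hs|apply/lexR_rcons => //; left].
- right; subst; split => //; apply/lexR_rcons => //; right; split => //.
Qed.

Lemma sl_size u p q : sl ord u p q -> size p <= size q.
Proof. by case=> [/ltnW|[-> _]]. Qed.

Fixpoint allseq (n : nat) : seq (seq V) :=
  if n is n'.+1 then [seq x :: s | x <- enum V, s <- allseq n'] else [:: [::]].

Lemma mem_allseq q : q \in allseq (size q).
Proof.
elim: q => [|x q IH] //=; apply: (allpairs_f (fun x s => x :: s)) => //.
by rewrite mem_enum.
Qed.

Lemma list_min (W : seq V -> Prop) (R : seq V -> seq V -> Prop) :
  (forall a b, W a -> W b -> a = b \/ R a b \/ R b a) ->
  (forall a b c, W a -> W b -> W c -> R a b -> R b c -> R a c) ->
  forall s : seq (seq V), (exists q, q \in s /\ W q) ->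
  exists m, W m /\ forall q, q \in s -> W q -> q = m \/ R m q.
Proof.
move=> Htot Htr; elim=> [|a s IH]; first by case=> q [].
move=> Hex.
case: (classic (exists q, q \in s /\ W q)) => [Hs|Hs].
  have [m [Wm Hm]] := IH Hs.
  case: (classic (W a)) => Wa.
    case: (Htot a m Wa Wm) => [Heq|[Ham|Hma]].
    - subst m.
      exists a; split => // q; rewrite inE => /orP[/eqP ->|Hq] Wq; first by left.
      exact: Hm.
    - exists a; split => // q; rewrite inE => /orP[/eqP ->|Hq] Wq; first by left.
      case: (Hm q Hq Wq) => [->|Hmq]; first by right.
      by right; apply: Htr Ham Hmq.
    - exists m; split => // q; rewrite inE => /orP[/eqP ->|Hq] Wq; first by right.
      exact: Hm.
  exists m; split => // q; rewrite inE => /orP[/eqP ->|Hq] Wq //; exact: Hm.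
case: Hex => q [Hq Wq].
exists a; move: Hq; rewrite inE => /orP[/eqP Hqa|Hq]; last by exfalso; apply: Hs; exists q.
subst; split => // q'; rewrite inE => /orP[/eqP ->|Hq'] Wq'; first by left.
by exfalso; apply: Hs; exists q'.
Qed.

Lemma minsize_ex v : exists m, walk E v0 v m /\
  forall q, walk E v0 v q -> size m <= size q.
Proof.
have [p Hp] := Hconn v.
suff H : forall n p, walk E v0 v p -> size p <= n -> exists m, walk E v0 v m /\
  forall q, walk E v0 v q -> size m <= size q by exact: (H _ p Hp (leqnn _)).
elim=> [|n IH] {Hp}p Hp Hs;
case: (classic (exists q, walk E v0 v q /\ size q < size p)) => [[q [Hq Hlt]]|Hno].
- by move: (leq_trans Hlt Hs).
- exists p; split => // q Hq; rewrite leqNgt; apply/negP => H; apply: Hno; by exists q.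
- by apply: (IH q) => //; rewrite -ltnS; apply: leq_trans Hlt Hs.
- exists p; split => // q Hq; rewrite leqNgt; apply/negP => H; apply: Hno; by exists q.
Qed.

Lemma walk_sl v w p q : walk E v0 v p -> walk E v0 w q ->
  (shortlex ord p q <-> sl ord v0 (behead p) (behead q)).
Proof.
move=> /walkE [p' [-> _]] /walkE [q' [-> _]] /=; exact: shortlex_sl.
Qed.

Lemma minpath_ex v : exists p, minpath E ord v0 v p.
Proof.
have [m [Hm Hmin]] := minsize_ex v.
pose W q := walk E v0 v q /\ size q = size m.
have Htot : forall a b, W a -> W b -> a = b \/ shortlex ord a b \/ shortlex ord b a.
  move=> a b [Ha _] [Hb _].
  have [->|Hab] := eqVneq a b; first by left.
  right; rewrite (walk_sl Ha Hb) (walk_sl Hb Ha).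
  move: Ha Hb Hab => /walkE [a' [-> [Ha _]]] /walkE [b' [-> [Hb _]]] Hab /=.
  apply: sl_tot => // Hab'; move: Hab; by rewrite Hab' eqxx.
have Htr : forall a b c, W a -> W b -> W c -> shortlex ord a b -> shortlex ord b c ->
    shortlex ord a c.
  move=> a b c [Ha _] [Hb _] [Hc _].
  rewrite (walk_sl Ha Hb) (walk_sl Hb Hc) (walk_sl Ha Hc); exact: sl_trans.
have Hex : exists q, q \in allseq (size m) /\ W q by exists m; split; [exact: mem_allseq|].
have [p [[Hp Hps] Hpmin]] := list_min Htot Htr Hex.
exists p; split => // q Hq.
have := Hmin q Hq; rewrite leq_eqVlt => /orP[/eqP Hs|Hs].
  have := Hpmin q; rewrite Hs mem_allseq => H.
  case: (H isT (conj Hq (esym Hs))) => [->|]; [by left|by right].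
by right; left; rewrite Hps.
Qed.

Definition mp v : seq V := proj1_sig (constructive_indefinite_description _ (minpath_ex v)).
Lemma mp_spec v : minpath E ord v0 v (mp v).
Proof. exact: (proj2_sig (constructive_indefinite_description _ (minpath_ex v))). Qed.

Definition mpt v := behead (mp v).

Lemma mp_walk v : mp v = v0 :: mpt v /\ is_walk E v0 (mpt v) /\ last v0 (mpt v) = v.
Proof.
have [/walkE [p [Hp [H1 H2]]] _] := mp_spec v.
by rewrite /mpt Hp.
Qed.

Lemma mpt_walk v : is_walk E v0 (mpt v).
Proof. by have [_ [H _]] := mp_walk v. Qed.
Lemma mpt_last v : last v0 (mpt v) = v.
Proof. by have [_ [_ H]] := mp_walk v. Qed.

Lemma mpt_min v q : is_walk E v0 q -> last v0 q = v -> q = mpt v \/ sl ord v0 (mpt v) q.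
Proof.
move=> Hq Hl.
have [_ Hmin] := mp_spec v.
have [Hmp _] := mp_walk v.
have Hw : walk E v0 v (v0 :: q) by apply/walkE; exists q.
case: (Hmin _ Hw); rewrite Hmp; first by case=> ->; left.
by move/shortlex_sl; right.
Qed.

Lemma minpath_mp v p : minpath E ord v0 v p -> p = mp v.
Proof.
move=> [Hp Hpmin].
have [Hmp [Hw Hl]] := mp_walk v.
have := Hpmin _ (proj1 (mp_spec v)).
case=> [//|H].
move: Hp H => /walkE [p' [-> [Hp' Hl']]]; rewrite Hmp => /shortlex_sl H.
case: (mpt_min Hp' Hl') => [->//|H'].
by case: (sl_irr (sl_trans H H')).
Qed.

Definition prec u v := sl ord v0 (mpt u) (mpt v).

Lemma prec_irr u : ~ prec u u.
Proof. exact: sl_irr. Qed.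
Lemma prec_trans u v w : prec u v -> prec v w -> prec u w.
Proof. exact: sl_trans. Qed.
Lemma prec_tot u v : u <> v -> prec u v \/ prec v u.
Proof.
move=> Huv; apply: sl_tot; try exact: mpt_walk.
by move=> H; apply: Huv; rewrite -(mpt_last u) -(mpt_last v) H.
Qed.

Lemma mpt_v0 : mpt v0 = [::].
Proof.
case: (@mpt_min v0 [::] I erefl) => [//|].
by case=> [|[]]; case: (mpt v0).
Qed.

Lemma mpt_nil u : mpt u = [::] -> u = v0.
Proof. by move=> H; rewrite -(mpt_last u) H. Qed.

Lemma no_prec_v0 x : ~ prec x v0.
Proof. by rewrite /prec mpt_v0; case=> [|[]]; case: (mpt x). Qed.

Lemma prec_v0 w : w <> v0 -> prec v0 w.
Proof.
move=> Hw; left; rewrite mpt_v0 /=.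
by case H: (mpt w) => //; case: Hw; apply: mpt_nil.
Qed.

Lemma parent w : w <> v0 -> exists y, E y w /\ mpt w = rcons (mpt y) w.
Proof.
move=> Hw.
have Hne : mpt w <> [::] by move/mpt_nil.
have Hl := mpt_last w; have Hwk := mpt_walk w.
case/lastP: (mpt w) Hne Hl Hwk (mpt_min (v := w)) => [//|s a] _.
rewrite last_rcons => -> /is_walk_rcons [Hs He] Hmin.
exists (last v0 s); split => //.
suff -> : mpt (last v0 s) = s by [].
have Hy := mpt_min Hs erefl.
have Hw' : is_walk E v0 (rcons (mpt (last v0 s)) w).
  by apply/is_walk_rcons; rewrite mpt_last; split => //; exact: mpt_walk.
case: (Hmin _ Hw' (last_rcons _ _ _)) => [H|].
  by case: (rcons_inj H) => ->.
move/sl_rcons => [H|[H _]]; last by [].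
case: Hy => [//|H'].
by case: (sl_irr (sl_trans H H')).
Qed.

Let A := S_edge E ord v0.

Lemma S_edgeP u v : A u v <-> v <> v0 /\ mpt v = rcons (mpt u) v.
Proof.
split.
  move=> [p [p1 [p2 [Hmin Hp]]]].
  have Hpm := minpath_mp Hmin.
  have [Hmp _] := mp_walk v.
  have [Hw Hmin'] := Hmin.
  have Hw2 : walk E v0 v (p1 ++ [:: u; v]).
    move: Hw; rewrite Hp; case: p1 {Hp} => [|a p1] /=.
      by case=> -> [[H _] _]; split => //.
    case=> -> [] /is_walk_cat [H1 /= [H2 [H3 _]]] _; split => //; split => //.
      by apply/is_walk_cat; split.
    by rewrite last_cat.
  have Hsz : size p <= size (p1 ++ [:: u; v]).
    case: (Hmin' _ Hw2) => [<-//|/(walk_sl Hw Hw2)/sl_size].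
    rewrite !size_behead; move: Hw Hw2 => /walkE [a [-> _]] /walkE [b [-> _]] //.
  have Hp2 : p2 = [::].
    move: Hsz; rewrite Hp !size_cat /=; case: (p2) => // x p2' /=.
    by rewrite leq_add2l.
  have {}Hp : v0 :: mpt v = rcons (rcons p1 u) v by rewrite -Hmp -Hpm Hp Hp2 -!cats1 -catA.
  have Hv : v <> v0.
    move=> Hv; move: Hp; rewrite Hv mpt_v0 => /(congr1 size).
    by rewrite !size_rcons.
  split => //.
  have [y [_ Hy]] := parent Hv.
  move: Hp; rewrite Hy -rcons_cons => /rcons_inj [Hyu].
  have : last v0 (v0 :: mpt y) = last v0 (rcons p1 u) by rewrite Hyu.
  by rewrite /= mpt_last last_rcons => ->.
move=> [Hv Hm].
exists (mp v), (belast v0 (mpt u)), [::]; split; first exact: mp_spec.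
have [Hmp _] := mp_walk v.
by rewrite Hmp Hm -rcons_cons lastI mpt_last -!cats1 -catA.
Qed.

Lemma TE_ne x y : clos_trans V A x y -> y <> v0.
Proof. by elim=> [a b /S_edgeP []|]. Qed.

Lemma TE_v0 u : u <> v0 -> clos_trans V A v0 u.
Proof.
move: {2}(size (mpt u)) (leqnn (size (mpt u))) => n.
elim: n u => [|n IH] u Hs Hu.
  by case: Hu; apply: mpt_nil; case: (mpt u) Hs.
have [y [_ Hy]] := parent Hu.
have Ayu : A y u by apply/S_edgeP.
have [Hy0|Hy0] := eqVneq y v0; first by rewrite -Hy0; exact: t_step.
apply: t_trans (t_step _ _ _ _ Ayu); apply: IH; last exact/eqP.
by move: Hs; rewrite Hy size_rcons.
Qed.

Lemma Awalk_mpt x : is_walk A v0 (mpt x).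
Proof.
move: {2}(size (mpt x)) (leqnn (size (mpt x))) => n.
elim: n x => [|n IH] x Hs; first by case: (mpt x) Hs.
have [->|Hx] := eqVneq x v0; first by rewrite mpt_v0.
have Hx' : x <> v0 by apply/eqP.
have [y [_ Hy]] := parent Hx'.
rewrite Hy; apply/is_walk_rcons; rewrite mpt_last; split.
  by apply: IH; move: Hs; rewrite Hy size_rcons.
by apply/S_edgeP; split.
Qed.

Lemma Awalk_eq x p : is_walk A v0 p -> last v0 p = x -> p = mpt x.
Proof.
elim/last_ind: p x => [|s a IH] x /=; first by move=> _ <-; rewrite mpt_v0.
rewrite last_rcons => /is_walk_rcons [Hs Ha] <-.
move/S_edgeP: Ha => [_ ->].
by rewrite {1}(IH _ Hs erefl).
Qed.

Lemma Tord_prec u v : clos_trans V A v0 u -> clos_trans V A v0 v ->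
  (Gamma_ord A (S_ord E ord v0) v0 v0 u v <-> prec u v).
Proof.
move=> Hu Hv; split.
  move=> [_ [_ [p1 [p2 [/walkE [p1' [-> [H1 L1]]] [/walkE [p2' [-> [H2 L2]]] H]]]]]].
  move/shortlex_sl: H; rewrite (Awalk_eq H1 L1) (Awalk_eq H2 L2).
  rewrite /sl /prec (lexR_sub (o' := ord) (R := A)) //; try exact: Awalk_mpt.
  by move=> w a b Ha Hb; rewrite /S_ord; tauto.
move=> H; split => //; split => //.
exists (v0 :: mpt u), (v0 :: mpt v).
split; first by apply/walkE; exists (mpt u); split => //; split; [exact: Awalk_mpt|exact: mpt_last].
split; first by apply/walkE; exists (mpt v); split => //; split; [exact: Awalk_mpt|exact: mpt_last].
apply/shortlex_sl; move: H; rewrite /sl /prec (lexR_sub (o' := ord) (R := A)) //; try exact: Awalk_mpt.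
by move=> w a b Ha Hb; rewrite /S_ord; tauto.
Qed.

Fixpoint pw (R : V * V -> V * V -> Prop) (s : seq (V * V)) : Prop :=
  match s with
  | [::] => True
  | x :: s' => (forall y, y \in s' -> R x y) /\ pw R s'
  end.

Lemma pw_cat R s t : pw R s -> pw R t -> (forall x y, x \in s -> y \in t -> R x y) ->
  pw R (s ++ t).
Proof.
elim: s => [|a s IH]; first by [].
move=> /= [H1 H2] Ht Hx; split.
  move=> y; rewrite mem_cat => /orP[|]; first exact: H1.
  by apply: Hx; rewrite inE eqxx.
by apply: IH => // x y Hxs; apply: Hx; rewrite inE Hxs orbT.
Qed.

Lemma pw_impl (R R' : V * V -> V * V -> Prop) s :
  (forall x y, x \in s -> y \in s -> R x y -> R' x y) -> pw R s -> pw R' s.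
Proof.
elim: s => [|a s IH]; first by [].
move=> /= Himp [H1 H2]; split.
  by move=> y Hy; apply: Himp; rewrite ?inE ?eqxx ?Hy ?orbT //; apply: H1.
by apply: IH => // x y Hx Hy; apply: Himp; rewrite inE ?Hx ?Hy orbT.
Qed.

Lemma chain_mem v x s y : chain (ord v) (x :: s) -> y \in s -> ord v x y.
Proof.
elim: s x => [|a s IH] x; first by [].
move=> /= [Hxa Hc]; rewrite inE => /orP[/eqP ->//|Hy].
by apply: ord_trans Hxa _; apply: IH.
Qed.

Lemma chain_pw v ns : chain (ord v) ns ->
  pw (fun e e' => e.1 = e'.1 /\ ord e.1 e.2 e'.2) [seq (v, y) | y <- ns].
Proof.
elim: ns => [|x ns IH]; first by [].
move=> /= Hc; split.
  move=> e /mapP [y Hy ->] /=; split => //; exact: chain_mem Hc Hy.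
by apply: IH; case: ns Hc => // a ns [].
Qed.

Definition Rq (L : seq V) (e e' : V * V) : Prop :=
  index e.1 L < index e'.1 L \/ (e.1 = e'.1 /\ ord e.1 e.2 e'.2).

Lemma crux (L : seq V) (e : V * V) (P' : seq (V * V)) :
  uniq L ->
  (forall x y, x \in L -> y \in L -> index x L < index y L -> prec x y) ->
  v0 \in L -> e.1 \in L -> E e.1 e.2 ->
  (forall e', e' \in P' -> Rq L e e') ->
  (forall x y, x \in L -> E x y -> y \notin L ->
     exists e', e' \in e :: P' /\ e'.2 = y /\ index e'.1 L <= index x L) ->
  forall w, w \notin L -> w <> e.2 -> prec e.2 w.
Proof.
move=> Hu Hs Hv0 He1 HE HR Hcl w.
move: {2}(size (mpt w)) (leqnn (size (mpt w))) => n.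
elim: n w => [|n IH] w Hsz Hw Hwv;
  (have Hw0 : w <> v0 by move=> H; move: Hw; rewrite H Hv0);
  have [y [Ey Hy]] := parent Hw0;
  first by rewrite Hy size_rcons in Hsz.
have Key : prec e.1 y \/ (e.1 = y /\ ord y e.2 w) -> prec e.2 w.
  move=> H.
  have Hwk : is_walk E v0 (rcons (mpt e.1) e.2).
    by apply/is_walk_rcons; rewrite mpt_last; split => //; exact: mpt_walk.
  have Hsl : sl ord v0 (rcons (mpt e.1) e.2) (mpt w).
    rewrite Hy; apply/sl_rcons; case: H => [H|[H1 H2]]; first by left.
    by right; rewrite H1 mpt_last; split => //; split => // H3; apply: Hwv.
  case: (mpt_min Hwk (last_rcons _ _ _)) => [Heq|H']; first by rewrite /prec -Heq.
  exact: sl_trans H' Hsl.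
case: (boolP (y \in L)) => HyL.
  have [e' [He' [He'2 Hidx]]] := Hcl y w HyL Ey Hw.
  move: He'; rewrite inE => /orP[/eqP He'e|He'].
    by case: Hwv; rewrite -He'2 He'e.
  apply: Key; case: (HR e' He') => [Hlt|[Heq Ho]].
    by left; apply: Hs => //; apply: leq_trans Hlt Hidx.
  move: Hidx; rewrite -Heq leq_eqVlt => /orP[/eqP Hi|Hlt].
    by right; split; [apply: (index_inj v0 He1 HyL Hi)|rewrite -(index_inj v0 He1 HyL Hi) -He'2].
  by left; apply: Hs.
have [Hye|Hye] := eqVneq y e.2.
  by rewrite /prec Hy -Hye; left; rewrite size_rcons.
apply: (@prec_trans _ y).
  apply: IH => //; first by move: Hsz; rewrite Hy size_rcons.
  exact/eqP.
by rewrite /prec Hy; left; rewrite size_rcons.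
Qed.

Definition Inv (L Q : seq V) : Prop :=
  uniq L /\
  (forall x y, x \in L -> y \notin L -> prec x y) /\
  (forall x y, x \in L -> y \in L -> index x L < index y L -> prec x y) /\
  (L = [::] -> Q = [:: v0]) /\
  (L <> [::] -> exists P, Q = [seq e.2 | e <- P] /\
     (forall e, e \in P -> e.1 \in L /\ E e.1 e.2) /\ pw (Rq L) P /\
     (forall x y, x \in L -> E x y -> y \notin L ->
        exists e, e \in P /\ e.2 = y /\ index e.1 L <= index x L)).

Lemma map_snd_pair (v : V) (s : seq V) : [seq e.2 | e <- [seq (v, y) | y <- s]] = s.
Proof. by elim: s => //= a s ->. Qed.

Lemma index_rcons_in (L : seq V) v x : x \in L -> index x (rcons L v) = index x L.
Proof. by move=> Hx; rewrite -cats1 index_cat Hx. Qed.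

Lemma index_rcons_v (L : seq V) v : v \notin L -> index v (rcons L v) = size L.
Proof. by move=> Hv; rewrite -cats1 index_cat (negbTE Hv) /= eqxx addn0. Qed.

Lemma v0_in L : L <> [::] -> (forall x y, x \in L -> y \notin L -> prec x y) -> v0 \in L.
Proof.
case: L => [//|x L] _ Hb; apply/negPn/negP => H.
by apply: (@no_prec_v0 x); apply: Hb => //; rewrite inE eqxx.
Qed.

Lemma inv_step s s' : lbfs_step E ord s s' -> Inv s.1 s.2 -> Inv s'.1 s'.2.
Proof.
case=> [L v Q HvL | L v Q ns HvL Hns Hmem Hch] /=.
  move=> [Hu [Hb [Hs [Hc Hd]]]]; do 3 (split => //); split.
    by move=> HL; move: HvL; rewrite HL.
  move=> HL; have [P [HQ [Hd1 [Hd2 Hd3]]]] := Hd HL.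
  case: P HQ Hd1 Hd2 Hd3 => [//|e P'] /= [He HQ] Hd1 [Hd2 Hd2'] Hd3.
  exists P'; split => //; split.
    by move=> e' He'; apply: Hd1; rewrite inE He' orbT.
  split => // x y Hx Hxy Hy.
  have [e' [He' [He'2 Hi]]] := Hd3 x y Hx Hxy Hy.
  move: He'; rewrite inE => /orP[/eqP Hee|He']; last by exists e'.
  by move: Hy; rewrite -He'2 Hee -He HvL.
move=> [Hu [Hb [Hs [Hc Hd]]]].
set L' := rcons L v.
have HinL' : forall x, x \in L' = (x == v) || (x \in L) by move=> x; rewrite mem_rcons inE.
have [Hcx Hd'] : (forall y, y \notin L' -> prec v y) /\
   exists P0, Q = [seq e.2 | e <- P0] /\
     (forall e, e \in P0 -> e.1 \in L /\ E e.1 e.2) /\ pw (Rq L) P0 /\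
     (forall x y, x \in L -> E x y -> y \notin L' ->
        exists e, e \in P0 /\ e.2 = y /\ index e.1 L <= index x L).
  have [HL|HL] := eqVneq L [::].
    have [Hvv HQ] : v = v0 /\ Q = [::] by case: (Hc HL).
    split; last by exists [::]; rewrite HL HQ.
    move=> y; rewrite HinL' negb_or => /andP[Hy _]; rewrite Hvv; apply: prec_v0 => Hy0.
    by move: Hy; rewrite Hy0 Hvv eqxx.
  have HL' : L <> [::] by apply/eqP.
  have Hv0 := v0_in HL' Hb.
  have [P [HQ [Hd1 [Hd2 Hd3]]]] := Hd HL'.
  case: P HQ Hd1 Hd2 Hd3 => [//|e P'] /= [He HQ] Hd1 [Hd2 Hd2'] Hd3.
  have [He1 HE] : e.1 \in L /\ E e.1 e.2 by apply: Hd1; rewrite inE eqxx.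
  split.
    move=> y; rewrite HinL' negb_or => /andP[Hyv HyL].
    rewrite He; apply: (crux Hu Hs Hv0 He1 HE Hd2 Hd3) => //.
    by rewrite -He; apply/eqP.
  exists P'; split => //; split.
    by move=> e' He'; apply: Hd1; rewrite inE He' orbT.
  split => // x y Hx Hxy; rewrite HinL' negb_or => /andP[Hyv Hy].
  have [e' [He' [He'2 Hi]]] := Hd3 x y Hx Hxy Hy.
  move: He'; rewrite inE => /orP[/eqP Hee|He']; last by exists e'.
  by move: Hyv; rewrite -He'2 Hee -He eqxx.
have [P0 [HQ [Hd1 [Hd2 Hd3]]]] := Hd'.
split; first by rewrite rcons_uniq HvL Hu.
split.
  move=> x y; rewrite HinL' => /orP[/eqP ->|Hx] Hy; first exact: Hcx.
  by apply: Hb => //; move: Hy; rewrite HinL' negb_or => /andP[].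
split.
  move=> x y; rewrite !HinL' => /orP[/eqP ->|Hx] /orP[/eqP ->|Hy].
  - by rewrite ltnn.
  - by rewrite index_rcons_v // index_rcons_in // ltnNge index_size.
  - by move=> _; apply: Hb.
  - by rewrite !index_rcons_in //; apply: Hs.
split; first by move/(congr1 size); rewrite size_rcons.
move=> _; exists (P0 ++ [seq (v, y) | y <- ns]); split.
  by rewrite map_cat map_snd_pair HQ.
split.
  move=> e; rewrite mem_cat => /orP[He|/mapP [y Hy ->]] /=.
    by have [H1 H2] := Hd1 e He; rewrite HinL' H1 orbT.
  by rewrite HinL' eqxx; split => //; case: (Hmem y) => /(_ Hy) [].
split.
  apply: pw_cat.
  - apply: (pw_impl _ Hd2) => e e' He He'.
    have [H1 _] := Hd1 e He; have [H2 _] := Hd1 e' He'.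
    by rewrite /Rq !index_rcons_in.
  - apply: (pw_impl _ (chain_pw Hch)) => e e' _ _ H; by right.
  - move=> e e' He /mapP [y _ ->]; left => /=.
    have [H1 _] := Hd1 e He.
    by rewrite index_rcons_in // index_rcons_v // index_mem.
move=> x y; rewrite HinL' => /orP[/eqP ->|Hx] Hxy Hy.
  exists (v, y); split; last by split.
  by rewrite mem_cat; apply/orP; right; apply: map_f; apply/Hmem.
have [e [He [He2 Hi]]] := Hd3 x y Hx Hxy Hy.
exists e; split; first by rewrite mem_cat He.
have [H1 _] := Hd1 e He.
by split => //; rewrite !index_rcons_in.
Qed.

Definition pb (P : Prop) : bool := if excluded_middle_informative P then true else false.
Lemma pbP P : pb P <-> P.
Proof. by rewrite /pb; case: (excluded_middle_informative P). Qed.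

Lemma sorted_chain v (s : seq V) :
  sorted (fun x y => (x == y) || pb (ord v x y)) s -> uniq s -> chain (ord v) s.
Proof.
elim: s => [|x s IH] //; case: s IH => [|y s] IH //=.
move=> /andP[Hxy Hp] /andP[Hx Hu]; split; last exact: IH.
move: Hxy => /orP[/eqP Hxy|/pbP //].
by move: Hx; rewrite Hxy inE => /norP [/eqP].
Qed.

Lemma ns_ex v (L : seq V) : exists ns, uniq ns /\
  (forall x, x \in ns <-> E v x /\ x \notin rcons L v) /\ chain (ord v) ns.
Proof.
pose s0 := [seq x <- enum V | pb (E v x /\ x \notin rcons L v)].
pose r := fun x y => (x == y) || pb (ord v x y).
exists (sort r s0).
have Hu : uniq (sort r s0) by rewrite sort_uniq filter_uniq // enum_uniq.
split => //; split.
  by move=> x; rewrite mem_sort mem_filter mem_enum andbT pbP.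
apply: sorted_chain => //.
apply: (@sort_sorted_in _ [pred x | pb (E v x)]).
  move=> x y /pbP Hx /pbP Hy; rewrite /r.
  have [->|Hxy] := eqVneq x y; first by apply/orP; left; apply/orP; left.
  have Hxy' : x <> y by apply/eqP.
  case: (ord_tot Hx Hy Hxy') => H; apply/orP; [left|right]; apply/orP; right; exact/pbP.
apply/allP => x; rewrite mem_filter => /andP[/pbP [Hx _] _] /=; exact/pbP.
Qed.

Lemma term k (L Q : seq V) : uniq L -> #|V| - size L <= k ->
  exists L', clos_refl_trans _ (lbfs_step E ord) (L, Q) (L', [::]).
Proof.
elim: k L Q => [|k IHk] L Q Hu Hk; elim: Q => [|v Q IHQ];
  try by exists L; apply: rt_refl.
- case: (boolP (v \in L)) => Hv.
    have [L' H] := IHQ; exists L'; apply: rt_trans H; apply: rt_step.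
    exact: lbfs_skip.
  exfalso.
  have : size (v :: L) <= #|V|.
    have /card_uniqP <- : uniq (v :: L) by rewrite /= Hv Hu.
    exact: max_card.
  move: Hk; rewrite leqn0 subn_eq0 => Hk /= H.
  by move: (leq_trans H Hk); rewrite ltnn.
- case: (boolP (v \in L)) => Hv.
    have [L' H] := IHQ; exists L'; apply: rt_trans H; apply: rt_step.
    exact: lbfs_skip.
  have [ns [Hns [Hmem Hch]]] := ns_ex v L.
  have [L' H] := IHk (rcons L v) (Q ++ ns) ltac:(by rewrite rcons_uniq Hv Hu)
    ltac:(by rewrite size_rcons subnS; move: Hk; case: (#|V| - size L)).
  exists L'; apply: rt_trans H; apply: rt_step; exact: lbfs_visit.
Qed.

Lemma inv_crt s s' : clos_refl_trans _ (lbfs_step E ord) s s' ->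
  Inv s.1 s.2 -> Inv s'.1 s'.2.
Proof.
elim=> [a b H|a|a b c _ H1 _ H2] //; first exact: inv_step.
by move/H1/H2.
Qed.

Lemma walk_in (L : seq V) : (forall x y, x \in L -> E x y -> y \in L) ->
  forall p x, x \in L -> is_walk E x p -> last x p \in L.
Proof.
move=> Hcl; elim=> [|a p IH] x //= Hx [Hxa Hp].
by apply: IH => //; apply: Hcl Hxa.
Qed.

Lemma main_sec :
  let TE := Gamma_edge (S_edge E ord v0) in
  let Tord := Gamma_ord (S_edge E ord v0) (S_ord E ord v0) v0 in
  (exists L, lbfs_traversal E ord v0 L) /\
  forall L, lbfs_traversal E ord v0 L ->
    (exists L', L = v0 :: L') /\
    (forall u, TE v0 u <-> u <> v0) /\
    (forall u v, TE v0 u -> TE v0 v -> (Tord v0 u v <-> precedes L u v)).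
Proof.
move=> TE Tord; split.
  by have [L' H] := @term #|V| [::] [:: v0] isT (leq_subr _ _); exists L'.
move=> L HL.
have HI : Inv L [::].
  apply: (inv_crt HL); rewrite /Inv /=; split => //; split => //; split => //.
have [Hu [Hb [Hs [Hc Hd]]]] := HI.
have HL0 : L <> [::] by move=> H; move: (Hc H).
have Hv0 := v0_in HL0 Hb.
have Hcl : forall x y, x \in L -> E x y -> y \in L.
  move=> x y Hx Hxy; apply/negPn/negP => Hy.
  have [P [HP [_ [_ Hd3]]]] := Hd HL0.
  have [e [He _]] := Hd3 x y Hx Hxy Hy.
  by move: He; case: P HP {Hd3} => //.
have Hall : forall y, y \in L.
  move=> y; have [p /walkE [p' [_ [Hp' Hl]]]] := Hconn y.
  by rewrite -Hl; apply: walk_in.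
split.
  case: L HL HI Hu Hb Hs Hc Hd HL0 Hv0 Hcl Hall => [//|x L'] _ _ _ _ Hs _ _ _ Hv0 _ _.
  exists L'; have [Hx|Hx] := eqVneq x v0; first by rewrite Hx.
  exfalso; apply: (@no_prec_v0 x); apply: Hs => //; first by rewrite inE eqxx.
  by rewrite /= (negbTE Hx) eq_refl.
split.
  move=> u; split; first exact: TE_ne.
  exact: TE_v0.
move=> u v Hu' Hv'.
rewrite /Tord Tord_prec //; split.
  move=> H; rewrite /precedes !Hall; split => //; split => //.
  case: (ltngtP (index u L) (index v L)) => // Hi.
    by case: (prec_irr (prec_trans H (Hs _ _ (Hall _) (Hall _) Hi))).
  by move: H; rewrite (index_inj v0 (Hall u) (Hall v) Hi) => /prec_irr.
by case=> Hu1 [Hv1 Hi]; apply: Hs.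
Qed.

End Main.

Theorem lemma9p2 (V : finType) (E : V -> V -> Prop) (ord : V -> V -> V -> Prop)
    (v0 : V) (Hord : edge_ordered E ord) (Hconn : connected E v0) :
  let TE := Gamma_edge (S_edge E ord v0) in
  let Tord := Gamma_ord (S_edge E ord v0) (S_ord E ord v0) v0 in
  (exists L, lbfs_traversal E ord v0 L) /\
  forall L, lbfs_traversal E ord v0 L ->
    (exists L', L = v0 :: L') /\
    (forall u, TE v0 u <-> u <> v0) /\
    (forall u v, TE v0 u -> TE v0 v -> (Tord v0 u v <-> precedes L u v)).
Proof.
exact: (@main_sec V E ord v0 Hord Hconn).
Qed.
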